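(* Let $\alpha,\beta,\gamma\in\mathbb R$ with $\alpha\beta>0$, and let $g\in C^0([0,1))$ be non-negative. Let $w\in C^1([0,1))\cap C^2((0,1))$ be a solution of the inhomogeneous hypergeometric equation $$z(1-z)w''(z)+(\gamma-(\alpha+\beta+1)z)w'(z)-\alpha\beta\,w(z)=g(z),\qquad 0\le z<1,$$ with $w(0)\ge0$ and $w'(0)>0$. Then $w$ is strictly increasing on $[0,1)$. *)

(* Defs.v *)
From Stdlib Require Import Reals.
From Coquelicot Require Export Coquelicot.
Open Scope R_scope.

Definition is_right_derive (f : R -> R) (x l : R) : Prop :=
  filterlim (fun h => (f (x + h) - f x) / h) (at_right 0) (locally l).

Definition right_continuous (f : R -> R) (x : R) : Prop :=
  filterlim f (at_right x) (locally (f x)).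

(* Main.v *)
Require Import Defs.
From Stdlib Require Import Reals Lra Classical.
From Coquelicot Require Import Coquelicot.
Open Scope R_scope.

Lemma L1 (f : R -> R) (x l : R) : filterlim f (at_right x) (locally l) -> 0 < l ->
  exists d, 0 < d /\ forall h, x < h < x + d -> 0 < f h.
Proof.
  intros H Hl.
  specialize (H (ball l (mkposreal l Hl)) (locally_ball _ _)).
  destruct H as [[e He] H]. exists e. split; [exact He|].
  intros h Hh. assert (Hb : ball x e h).
  { change (Rabs (h - x) < e). rewrite Rabs_right; lra. }
  specialize (H h Hb ltac:(lra)). change (Rabs (f h - l) < l) in H.
  apply Rabs_def2 in H. lra.
Qed.

Lemma L3 (f : R -> R) (x : R) : continuous f x ->
  forall eps, 0 < eps -> exists d, 0 < d /\ forall y, Rabs (y - x) < d -> Rabs (f y - f x) < eps.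
Proof.
  intros H eps He.
  specialize (H (ball (f x) (mkposreal eps He)) (locally_ball _ _)).
  destruct H as [[e He'] H]. exists e. split; [exact He'|].
  intros y Hy. exact (H y Hy).
Qed.

Lemma L2 (w dw : R -> R) (a b : R)
  (Hw_der : forall z, 0 < z < 1 -> is_derive w z (dw z))
  (Ha : 0 < a) (Hab : a < b) (Hb : b < 1) :
  exists c, a <= c <= b /\ w b - w a = dw c * (b - a).
Proof.
  destruct (MVT_gen w a b dw) as [c [Hc Hc']].
  - intros x Hx. rewrite Rmin_left in Hx by lra. rewrite Rmax_right in Hx by lra.
    apply Hw_der; lra.
  - intros x Hx. rewrite Rmin_left in Hx by lra. rewrite Rmax_right in Hx by lra.
    apply continuity_pt_filterlim. apply (@ex_derive_continuous R_AbsRing R_NormedModule).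
    exists (dw x). apply Hw_der; lra.
  - exists c. rewrite Rmin_left in Hc by lra. rewrite Rmax_right in Hc by lra. auto.
Qed.

Theorem lemma4p5 (alpha beta gamma : R) (g w dw d2w : R -> R)
  (Hab : alpha * beta > 0)
  (* g in C^0([0,1)), g >= 0 *)
  (Hg_cont : forall z, 0 < z < 1 -> continuous g z)
  (Hg_cont0 : right_continuous g 0)
  (Hg_nonneg : forall z, 0 <= z < 1 -> 0 <= g z)
  (* w in C^1([0,1)) with derivative dw *)
  (Hw_der0 : is_right_derive w 0 (dw 0))
  (Hw_der : forall z, 0 < z < 1 -> is_derive w z (dw z))
  (Hdw_cont0 : right_continuous dw 0)
  (Hdw_cont : forall z, 0 < z < 1 -> continuous dw z)
  (* w in C^2((0,1)) with second derivative d2w *)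
  (Hdw_der : forall z, 0 < z < 1 -> is_derive dw z (d2w z))
  (Hd2w_cont : forall z, 0 < z < 1 -> continuous d2w z)
  (* the equation on [0,1) (at z = 0 the w'' term vanishes) *)
  (Heq : forall z, 0 <= z < 1 ->
     z * (1 - z) * d2w z + (gamma - (alpha + beta + 1) * z) * dw z
       - alpha * beta * w z = g z)
  (Hw0 : 0 <= w 0)
  (Hdw0 : 0 < dw 0) :
  forall x y, 0 <= x -> x < y -> y < 1 -> w x < w y.
Proof.
  destruct (L1 _ _ _ Hw_der0 Hdw0) as [d1 [Hd1 Hq]].
  assert (Hw0h : forall h, 0 < h < d1 -> w 0 < w h).
  { intros h Hh. specialize (Hq h ltac:(lra)). rewrite Rplus_0_l in Hq.
    apply Rmult_lt_reg_r with (/ h).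
    - apply Rinv_0_lt_compat; lra.
    - unfold Rdiv in Hq. lra. }
  destruct (L1 _ _ _ Hdw_cont0 Hdw0) as [d0 [Hd0 Hdp]].
  assert (Hpos : forall z, 0 <= z < 1 -> 0 < dw z).
  { intros z1 Hz1. apply NNPP. intro Hn. apply Rnot_lt_le in Hn.
    assert (Hz1p : 0 < z1).
    { destruct (Req_dec z1 0) as [->|]; [lra|lra]. }
    set (E := fun t => 0 <= t <= z1 /\ forall s, 0 <= s <= t -> 0 < dw s).
    destruct (completeness E) as [m [Hub Hlub]].
    { exists z1. intros t [Ht _]. lra. }
    { exists 0. split; [lra|]. intros s Hs. replace s with 0 by lra. exact Hdw0. }
    assert (Hm1 : m <= z1).
    { apply Hlub. intros t [Ht _]. lra. }
    assert (Hm0 : 0 < m).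
    { set (t := Rmin (d0/2) z1).
      assert (Et : E t).
      { split. { unfold t; split; [apply Rmin_glb; lra | apply Rmin_r]. }
        intros s Hs. destruct (Req_dec s 0) as [->|Hs0]; [exact Hdw0|].
        apply Hdp. assert (t <= d0/2) by apply Rmin_l. lra. }
      specialize (Hub t Et). assert (0 < t) by (unfold t; apply Rmin_glb_lt; lra). lra. }
    assert (HP : forall s, 0 <= s < m -> 0 < dw s).
    { intros s Hs. apply NNPP. intro Hn'.
      assert (Hs' : is_upper_bound E s).
      { intros t Et. apply Rnot_lt_le. intro Hts. apply Hn'. apply (proj2 Et). lra. }
      specialize (Hlub s Hs'). lra. }
    assert (Hge : 0 <= dw m).
    { apply Rnot_lt_le. intro Hlt.
      destruct (L3 _ _ (Hdw_cont m ltac:(lra)) (- dw m) ltac:(lra)) as [d [Hd Hc]].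
      set (s := Rmax (m - d/2) (m/2)).
      assert (m - d/2 <= s) by apply Rmax_l. assert (m/2 <= s) by apply Rmax_r.
      assert (s < m) by (unfold s; apply Rmax_lub_lt; lra).
      specialize (Hc s ltac:(rewrite Rabs_left; lra)).
      specialize (HP s ltac:(lra)). apply Rabs_def2 in Hc. lra. }
    assert (Hle : dw m <= 0).
    { apply Rnot_lt_le. intro Hlt.
      destruct (Req_dec m z1) as [<-|Hmz]; [lra|].
      destruct (L3 _ _ (Hdw_cont m ltac:(lra)) (dw m) Hlt) as [d [Hd Hc]].
      set (t := Rmin (m + d/2) z1).
      assert (t <= m + d/2) by apply Rmin_l. assert (t <= z1) by apply Rmin_r.
      assert (m < t) by (unfold t; apply Rmin_glb_lt; lra).
      assert (Et : E t).
      { split; [lra|]. intros s Hs.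
        destruct (Rlt_le_dec s m); [apply HP; lra|].
        specialize (Hc s ltac:(rewrite Rabs_right; lra)). apply Rabs_def2 in Hc. lra. }
      specialize (Hub t Et). lra. }
    assert (Hdm : dw m = 0) by lra.
    assert (Hwm : 0 < w m).
    { set (h := Rmin (d1/2) (m/2)).
      assert (h <= d1/2) by apply Rmin_l. assert (h <= m/2) by apply Rmin_r.
      assert (0 < h) by (unfold h; apply Rmin_glb_lt; lra).
      specialize (Hw0h h ltac:(lra)).
      destruct (L2 w dw h m Hw_der ltac:(lra) ltac:(lra) ltac:(lra)) as [c [Hc Hc']].
      assert (0 <= dw c).
      { destruct (Rlt_le_dec c m); [left; apply HP; lra|]. replace c with m by lra. lra. }
      assert (0 <= dw c * (m - h)) by (apply Rmult_le_pos; lra). lra. }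
    assert (Hd2 : d2w m <= 0).
    { apply Rnot_lt_le. intro Hlt.
      pose proof (proj1 (is_derive_Reals _ _ _) (Hdw_der m ltac:(lra))) as Hdw_der'.
      destruct (Hdw_der' (d2w m) Hlt) as [[dd Hdd] Hder].
      set (h := - Rmin (dd/2) (m/2)).
      assert (Rmin (dd/2) (m/2) <= dd/2) by apply Rmin_l.
      assert (Rmin (dd/2) (m/2) <= m/2) by apply Rmin_r.
      assert (0 < Rmin (dd/2) (m/2)) by (apply Rmin_glb_lt; lra).
      specialize (Hder h ltac:(unfold h; lra) ltac:(simpl; unfold h; rewrite Rabs_left; lra)).
      apply Rabs_def2 in Hder. rewrite Hdm, Rminus_0_r in Hder.
      specialize (HP (m + h) ltac:(unfold h; lra)).
      assert (Hq2 : 0 < dw (m + h) / h).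
      { destruct Hder. lra. }
      assert (h < 0) by (unfold h; lra).
      unfold Rdiv in Hq2.
      assert (dw (m + h) * / h < 0).
      { apply Rmult_pos_neg; [lra| apply Rinv_lt_0_compat; lra]. }
      lra. }
    specialize (Heq m ltac:(lra)). specialize (Hg_nonneg m ltac:(lra)).
    rewrite Hdm in Heq.
    assert (0 < m * (1 - m)) by (apply Rmult_lt_0_compat; lra).
    assert (m * (1 - m) * d2w m <= 0).
    { apply Rmult_le_0_l; lra. }
    assert (0 < alpha * beta * w m) by (apply Rmult_lt_0_compat; lra).
    lra. }
  intros x y Hx Hxy Hy.
  assert (Hstrict : forall a b, 0 < a -> a < b -> b < 1 -> w a < w b).
  { intros a b Ha Hab' Hb.
    destruct (L2 w dw a b Hw_der Ha Hab' Hb) as [c [Hc Hc']].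
    assert (0 < dw c * (b - a)) by (apply Rmult_lt_0_compat; [apply Hpos; lra | lra]).
    lra. }
  destruct (Req_dec x 0) as [->|Hx0].
  - set (h := Rmin (d1/2) (y/2)).
    assert (h <= d1/2) by apply Rmin_l. assert (h <= y/2) by apply Rmin_r.
    assert (0 < h) by (unfold h; apply Rmin_glb_lt; lra).
    specialize (Hw0h h ltac:(lra)). specialize (Hstrict h y ltac:(lra) ltac:(lra) Hy). lra.
  - apply Hstrict; lra.
Qed.
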